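(* Assume the following statement holds: for every complex sequence $(b_n)_{n\geq 0}$ such that for some integer $l\geq 1$ one has $b_nb_{n+l}=0$ for all $n\geq 0$, if $a_n:=\sum_{k=0}^n(-1)^{n-k}\binom{n}{k}b_k$ satisfies $\lim_{n\to\infty}a_n=0$, then $b_n=0$ for all $n$. Then, for any $\theta>0$: if $\mathcal{P}=\sum_{p,q=0}^\infty a_{p,q}x^py^q\in A^\infty(\mathbb{R}^2_\theta)$ satisfies $\mathcal{P}^2=\mathcal{P}=\mathcal{P}^*$ and there is $k\in\mathbb{N}$ such that $a_{p,q}=0$ for all $(p,q)$ with $|p-q|>k$, then $\mathcal{P}=0$ or $\mathcal{P}=1$.
   Context: $A^\infty(\mathbb{R}^2_\theta)$ is the algebra of formal series $\sum_{p,q\geq 0}a_{p,q}x^py^q$, $a_{p,q}\in\mathbb{C}$, whose coefficient function $(p,q)\mapsto a_{p,q}$ is of Schwartz class on $\mathbb{N}^2$ (for every $r\geq1$ there is $C_r$ with $\sup_{p,q}(1+p^2+q^2)^r|a_{p,q}|<C_r$), where $x,y$ are self-adjoint with $[x,y]=xy-yx=-i\theta$, i.e. $yx=xy+i\theta$; products are computed by reordering into the normal form $x^py^q$ using this relation, and the adjoint is determined by $(a\,x^py^q)^*=\bar a\,y^qx^p$ (then reordered). *)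

(* Defs.v *)
From Stdlib Require Import Reals Arith.
From Coquelicot Require Export Coquelicot.
Open Scope R_scope.

Fixpoint binom (n k : nat) : nat :=
  match n, k with
  | _, O => 1%nat
  | O, S _ => 0%nat
  | S n', S k' => (binom n' k' + binom n' (S k'))%nat
  end.

Fixpoint cpow (z : C) (n : nat) : C :=
  match n with O => RtoC 1 | S n' => Cmult z (cpow z n') end.

Fixpoint csum (f : nat -> C) (n : nat) : C :=
  match n with O => f O | S n' => Cplus (csum f n') (f (S n')) end.

Definition absdiff (p q : nat) : nat := (p - q + (q - p))%nat.

(* An element of A^oo(R^2_theta) is represented by its coefficient function
   (p,q) |-> a_{p,q} of the normally ordered series sum a_{p,q} x^p y^q. *)
Definition coefs := nat -> nat -> C.

Definition schwartz (a : coefs) : Prop :=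
  forall r : nat, (1 <= r)%nat ->
    exists Cr : R, forall p q : nat,
      (1 + INR p ^ 2 + INR q ^ 2) ^ r * Cmod (a p q) < Cr.

(* i*theta = [y,x] = yx - xy *)
Definition itheta (theta : R) : C := Cmult Ci (RtoC theta).

(* normal ordering:  y^q x^r = sum_j j! C(q,j) C(r,j) (i theta)^j x^(r-j) y^(q-j) *)
Definition reorder (theta : R) (q r j : nat) : C :=
  Cmult (RtoC (INR (fact j * binom q j * binom r j))) (cpow (itheta theta) j).

(* j-th term (contraction order j) of the (m,n) coefficient of the product a*b:
   contributions of a_{p,q'} x^p y^q' * b_{r',s} x^r' y^s with p + r' - j = m,
   q' + s - j = n, i.e. q' = n - s + j, r' = m - p + j, for p <= m, s <= n. *)
Definition prod_term (theta : R) (a b : coefs) (m n j : nat) : C :=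
  csum (fun p => csum (fun s =>
      Cmult (Cmult (a p (n - s + j)%nat) (b (m - p + j)%nat s))
            (reorder theta (n - s + j) (m - p + j) j)) n) m.

Definition is_product (theta : R) (a b c : coefs) : Prop :=
  forall m n : nat, is_series (fun j => prod_term theta a b m n j) (c m n).

(* c = a^* : (a x^p y^q)^* = conj(a) y^q x^p, reordered; contributions to
   x^m y^n come from p = m + j, q = n + j. *)
Definition is_adjoint (theta : R) (a c : coefs) : Prop :=
  forall m n : nat,
    is_series (fun j => Cmult (Cconj (a (m + j)%nat (n + j)%nat))
                              (reorder theta (n + j) (m + j) j)) (c m n).

Definition zero_coefs : coefs := fun _ _ => RtoC 0.
Definition one_coefs : coefs :=
  fun p q => match p, q with O, O => RtoC 1 | _, _ => RtoC 0 end.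

Definition binom_transform (b : nat -> C) (n : nat) : C :=
  csum (fun k => Cmult (Cmult (cpow (RtoC (-1)) (n - k)) (RtoC (INR (binom n k)))) (b k)) n.

Definition SequenceHypothesis : Prop :=
  forall b : nat -> C,
    (exists l : nat, (1 <= l)%nat /\ forall n : nat, Cmult (b n) (b (n + l)%nat) = RtoC 0) ->
    filterlim (binom_transform b) eventually (locally (RtoC 0)) ->
    forall n : nat, b n = RtoC 0.

(* Main.v *)
Require Import Defs.
From Stdlib Require Import Reals Arith Lia Lra Classical FunctionalExtensionality.
From Coquelicot Require Import Coquelicot.
Open Scope R_scope.
Open Scope C_scope.


Lemma csum_ext (f g : nat -> C) n : (forall i, (i <= n)%nat -> f i = g i) -> csum f n = csum g n.
Proof. induction n; intros H; simpl. - apply H; lia. - rewrite IHn by (intros; apply H; lia). rewrite H by lia. reflexivity. Qed.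

Lemma csum_plus (f g : nat -> C) n : csum (fun i => f i + g i) n = csum f n + csum g n.
Proof. induction n; simpl. reflexivity. rewrite IHn. ring. Qed.

Lemma csum_mult_l (c : C) (f : nat -> C) n : c * csum f n = csum (fun i => c * f i) n.
Proof. induction n; simpl. reflexivity. rewrite <- IHn. ring. Qed.

Lemma csum_mult_r (c : C) (f : nat -> C) n : csum f n * c = csum (fun i => f i * c) n.
Proof. induction n; simpl. reflexivity. rewrite <- IHn. ring. Qed.

Lemma csum_zero (f : nat -> C) n : (forall i, (i <= n)%nat -> f i = 0) -> csum f n = 0.
Proof. induction n; intros H; simpl. - apply H; lia. - rewrite IHn by (intros; apply H; lia). rewrite H by lia. ring. Qed.

Lemma csum_swap (f : nat -> nat -> C) n m :
  csum (fun i => csum (fun j => f i j) m) n = csum (fun j => csum (fun i => f i j) n) m.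
Proof.
  induction n; simpl. reflexivity.
  rewrite IHn. rewrite <- csum_plus. reflexivity.
Qed.

Lemma csum_extend (f : nat -> C) n m : (n <= m)%nat -> (forall i, (n < i <= m)%nat -> f i = 0) -> csum f m = csum f n.
Proof.
  induction m; intros Hle H.
  - replace n with 0%nat by lia. reflexivity.
  - destruct (Nat.eq_dec n (S m)) as [->|Hn]. reflexivity.
    simpl. rewrite IHm by (try lia; intros; apply H; lia). rewrite H by lia. ring.
Qed.

Lemma csum_bounds (f : nat -> C) n m : (forall i, (Nat.min n m < i)%nat -> (i <= Nat.max n m)%nat -> f i = 0) -> csum f n = csum f m.
Proof.
  intros H. destruct (le_lt_dec n m).
  - symmetry. apply csum_extend. lia. intros; apply H; lia.
  - apply csum_extend. lia. intros; apply H; lia.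
Qed.

Lemma csum_S_first (f : nat -> C) n : csum f (S n) = f 0%nat + csum (fun i => f (S i)) n.
Proof. induction n. simpl. reflexivity. change (csum f (S (S n))) with (csum f (S n) + f (S (S n))).
  rewrite IHn. simpl. ring. Qed.

Lemma csum_single (f : nat -> C) i0 n : (forall i, i <> i0 -> f i = 0) ->
  csum f n = if (i0 <=? n)%nat then f i0 else 0.
Proof.
  intros H. induction n; simpl.
  - destruct i0; simpl. reflexivity. apply H; lia.
  - rewrite IHn. destruct (Nat.eq_dec i0 (S n)) as [->|Hn].
    + rewrite (proj2 (Nat.leb_gt (S n) n)) by lia. rewrite Nat.leb_refl. ring.
    + rewrite (H (S n)) by lia. destruct (i0 <=? n)%nat eqn:E1.
      * apply Nat.leb_le in E1. rewrite (proj2 (Nat.leb_le i0 (S n))) by lia. ring.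
      * apply Nat.leb_gt in E1. rewrite (proj2 (Nat.leb_gt i0 (S n))) by lia. ring.
Qed.

Lemma csum_tri (f : nat -> nat -> C) N :
  csum (fun n => csum (fun s => f n s) n) N =
  csum (fun s => csum (fun n => if (s <=? n)%nat then f n s else 0) N) N.
Proof.
  rewrite <- csum_swap. apply csum_ext. intros n Hn.
  rewrite (csum_extend (fun s => if (s <=? n)%nat then f n s else 0) n N Hn).
  - apply csum_ext. intros i Hi. rewrite (proj2 (Nat.leb_le i n)) by lia. reflexivity.
  - intros i Hi. rewrite (proj2 (Nat.leb_gt i n)) by lia. reflexivity.
Qed.

Lemma csum_shift (g : nat -> C) s t :
  csum (fun n => if (s <=? n)%nat then g (n - s)%nat else 0) (s + t) = csum g t.
Proof.
  induction t.
  - rewrite Nat.add_0_r. destruct s.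
    + simpl. reflexivity.
    + change (csum ?f (S s)) with (csum f s + f (S s)). rewrite csum_zero. rewrite Nat.leb_refl, Nat.sub_diag. simpl. ring.
      intros i Hi. rewrite (proj2 (Nat.leb_gt (S s) i)) by lia. reflexivity.
  - rewrite Nat.add_succ_r. change (csum ?f (S ?k)) with (csum f k + f (S k)). rewrite IHt.
    rewrite (proj2 (Nat.leb_le s (S (s+t)))) by lia.
    replace (S (s + t) - s)%nat with (S t) by lia. reflexivity.
Qed.

Fixpoint nsum (f : nat -> nat) (n : nat) : nat :=
  match n with O => f O | S n' => (nsum f n' + f (S n'))%nat end.

Lemma nsum_csum f n : RtoC (INR (nsum f n)) = csum (fun i => RtoC (INR (f i))) n.
Proof. induction n. reflexivity. change (nsum f (S n)) with (nsum f n + f (S n))%nat.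
  change (csum ?g (S n)) with (csum g n + g (S n)). cbv beta. rewrite plus_INR, RtoC_plus, IHn. reflexivity. Qed.

Lemma nsum_ext f g n : (forall i, (i <= n)%nat -> f i = g i) -> nsum f n = nsum g n.
Proof. induction n; intros H; simpl. apply H; lia. rewrite IHn by (intros; apply H; lia). rewrite H by lia. reflexivity. Qed.

Lemma nsum_plus f g n : nsum (fun i => f i + g i)%nat n = (nsum f n + nsum g n)%nat.
Proof. induction n; simpl. reflexivity. rewrite IHn. lia. Qed.

Lemma nsum_mult_r f c n : (nsum f n * c)%nat = nsum (fun i => f i * c)%nat n.
Proof. induction n; simpl. reflexivity. rewrite <- IHn. lia. Qed.

Lemma nsum_S_first f n : nsum f (S n) = (f 0%nat + nsum (fun i => f (S i)) n)%nat.
Proof. induction n. simpl. reflexivity. change (nsum f (S (S n))) with (nsum f (S n) + f (S (S n)))%nat.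
  rewrite IHn. simpl. lia. Qed.


Lemma binom_gt n j : (n < j)%nat -> binom n j = 0%nat.
Proof. revert j; induction n; intros j H; destruct j; simpl; try lia.
  rewrite !IHn by lia. reflexivity. Qed.

Lemma binom_0 n : binom n 0 = 1%nat.
Proof. destruct n; reflexivity. Qed.

Lemma binom_nn n : binom n n = 1%nat.
Proof. induction n; simpl. reflexivity. rewrite IHn, binom_gt by lia. reflexivity. Qed.

Lemma binom_pos n j : (j <= n)%nat -> (1 <= binom n j)%nat.
Proof. revert j; induction n; intros j H; destruct j; simpl; try lia.
  specialize (IHn j ltac:(lia)). lia. Qed.

Lemma binom_1 n : binom n 1 = n.
Proof. induction n; simpl. reflexivity. rewrite IHn, binom_0. lia. Qed.

Lemma bpascal n k : binom (S n) k = (binom n k + match k with O => O | S k' => binom n k' end)%nat.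
Proof. destruct k; simpl. rewrite binom_0; reflexivity. lia. Qed.

Lemma absorb n j : (binom n j * (n - j))%nat = (binom n (S j) * S j)%nat.
Proof.
  revert j; induction n; intros j.
  - destruct j; simpl; lia.
  - destruct j.
    + rewrite binom_1, binom_0. lia.
    + change (binom (S n) (S j)) with (binom n j + binom n (S j))%nat.
      change (binom (S n) (S (S j))) with (binom n (S j) + binom n (S (S j)))%nat.
      pose proof (IHn j) as H1. pose proof (IHn (S j)) as H2.
      destruct (le_lt_dec (S j) n).
      * replace (S n - S j)%nat with (n - j)%nat by lia.
        replace (n - j)%nat with (S (n - S j)) by lia.
        replace (n - S j)%nat with (n - S j)%nat in H2 by lia.
        replace (n - j)%nat with (S (n - S j)) in H1 by lia. nia.
      * rewrite (binom_gt n (S j)) by lia. rewrite (binom_gt n (S (S j))) by lia. lia.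
Qed.

Fixpoint ffn (N m : nat) : nat :=
  match m with O => 1%nat | S m' => (ffn N m' * (N - m'))%nat end.

Lemma ffn_zero N m : (N < m)%nat -> ffn N m = 0%nat.
Proof. induction m; intros H. lia. simpl. destruct (Nat.eq_dec m N) as [->|Hn].
  rewrite Nat.sub_diag; lia. rewrite IHm by lia. lia. Qed.

Lemma ffn_nz N m : ffn N m <> 0%nat -> (m <= N)%nat.
Proof. intros H. destruct (le_lt_dec m N). auto. exfalso. apply H, ffn_zero; auto. Qed.

Lemma ffn_fact n j : ffn n j = (fact j * binom n j)%nat.
Proof. induction j; simpl. rewrite binom_0. reflexivity.
  rewrite IHj. rewrite <- Nat.mul_assoc, absorb. change (fact (S j)) with (S j * fact j)%nat. lia. Qed.

Lemma identJ N D s q : (ffn N s * ffn (N + D) q)%nat =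
  nsum (fun j => fact j * binom q j * binom (s + D) j * ffn N (q + s - j))%nat q.
Proof.
  induction q.
  - cbn [nsum ffn]. rewrite !binom_0, Nat.add_0_l, Nat.sub_0_r. simpl. lia.
  - change (ffn (N + D) (S q)) with (ffn (N + D) q * (N + D - q))%nat.
    rewrite Nat.mul_assoc, IHq, nsum_mult_r.
    rewrite (nsum_ext _ (fun j => fact j * binom q j * binom (s + D) j * ffn N (S q + s - j)
        + fact (S j) * binom q j * binom (s + D) (S j) * ffn N (q + s - j))%nat).
    2:{ intros j Hj. replace (S q + s - j)%nat with (S (q + s - j)) by lia.
        change (ffn N (S (q + s - j))) with (ffn N (q + s - j) * (N - (q + s - j)))%nat.
        change (fact (S j)) with (S j * fact j)%nat.
        pose proof (absorb (s + D) j) as HA.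
        destruct (Nat.eq_dec (ffn N (q + s - j)) 0) as [E|E]. rewrite E. lia.
        apply ffn_nz in E.
        destruct (le_lt_dec j (s + D)) as [Hl|Hl].
        2:{ rewrite (binom_gt (s+D) j) by lia. rewrite (binom_gt (s+D) (S j)) by lia. lia. }
        replace (N + D - q)%nat with ((N - (q + s - j)) + (s + D - j))%nat by lia.
        set (m := (q + s - j)%nat) in *.
        set (X := (s + D - j)%nat) in *.
        rewrite Nat.mul_add_distr_l. f_equal. ring.
        transitivity (fact j * binom q j * ffn N m * (binom (s + D) j * X))%nat. ring.
        rewrite HA. ring. }
    rewrite nsum_plus.
    rewrite (nsum_ext (fun j => fact j * binom (S q) j * binom (s + D) j * ffn N (S q + s - j))%nat
      (fun j => fact j * binom q j * binom (s + D) j * ffn N (S q + s - j) +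
         fact j * (match j with O => O | S k' => binom q k' end) * binom (s + D) j * ffn N (S q + s - j))%nat).
    2:{ intros j _. rewrite bpascal. lia. }
    rewrite nsum_plus. f_equal.
    + change (nsum ?f (S q)) with (nsum f q + f (S q))%nat. cbv beta. rewrite (binom_gt q (S q)) by lia. lia.
    + rewrite nsum_S_first. simpl (fact 0 * _)%nat. apply nsum_ext. intros j _. reflexivity.
Qed.


Lemma cpow_add z a b : cpow z (a + b) = cpow z a * cpow z b.
Proof. induction a; simpl. ring. rewrite IHa. ring. Qed.

Lemma RtoC_INR_mult a b : RtoC (INR (a * b)) = RtoC (INR a) * RtoC (INR b).
Proof. rewrite mult_INR, RtoC_mult. reflexivity. Qed.

Lemma reorder_sym th q r j : reorder th q r j = reorder th r q j.
Proof. unfold reorder. f_equal. f_equal. f_equal. lia. Qed.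

Lemma reorder_zero th q r j : (r < j)%nat -> reorder th q r j = 0.
Proof. intros H. unfold reorder. rewrite (binom_gt r j H). rewrite Nat.mul_0_r. simpl. ring. Qed.

Definition Fz (th : R) (u : nat -> C) (M : nat) : C :=
  csum (fun q => u q * cpow (itheta th) q * RtoC (INR (ffn M q))) M.

Definition wz (th : R) (u : nat -> C) (D n : nat) : C :=
  csum (fun j => csum (fun s => u (n - s + j)%nat * u s * reorder th (n - s + j) (s + D) j) n) (n + D).

Section LA.
Variable th : R.
Variable u : nat -> C.
Variable D : nat.

Definition Yt N s q j := u q * u s * cpow (itheta th) q * cpow (itheta th) s *
   RtoC (INR (fact j * binom q j * binom (s + D) j * ffn N (q + s - j))).
Definition Xt N n j s := u (n - s + j)%nat * u s * reorder th (n - s + j) (s + D) j * cpow (itheta th) n * RtoC (INR (ffn N n)).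

Lemma LA_lhs N : Fz th u (N + D) * Fz th u N =
  csum (fun s => csum (fun j => csum (fun q => Yt N s q j) (N + D)) (N + D)) N.
Proof.
  unfold Fz. rewrite csum_mult_r.
  rewrite (csum_ext _ (fun q => csum (fun s => (u q * cpow (itheta th) q * RtoC (INR (ffn (N + D) q))) *
      (u s * cpow (itheta th) s * RtoC (INR (ffn N s)))) N)).
  2:{ intros q _. rewrite csum_mult_l. reflexivity. }
  rewrite csum_swap. apply csum_ext. intros s Hs.
  rewrite <- csum_swap. apply csum_ext. intros q Hq.
  rewrite (csum_extend (fun j => Yt N s q j) q (N + D)%nat) by (try lia; intros j Hj; unfold Yt; rewrite (binom_gt q j) by lia;
     rewrite Nat.mul_0_r, !Nat.mul_0_l; simpl; ring).
  unfold Yt. rewrite <- csum_mult_l.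
  transitivity (u q * u s * cpow (itheta th) q * cpow (itheta th) s * RtoC (INR (ffn N s * ffn (N + D) q))).
  - rewrite RtoC_INR_mult. ring.
  - rewrite identJ, nsum_csum. reflexivity.
Qed.

Lemma LA_rhs N : Fz th (wz th u D) N =
  csum (fun s => csum (fun j => csum (fun n => if (s <=? n)%nat then Xt N n j s else 0) N) (N + D)) N.
Proof.
  unfold Fz, wz.
  rewrite (csum_ext _ (fun n => csum (fun s => csum (fun j => Xt N n j s) (N + D)) n)).
  2:{ intros n Hn. rewrite !csum_mult_r.
      rewrite <- (csum_extend _ (n + D)%nat (N + D)%nat).
      - rewrite csum_swap. apply csum_ext. intros s Hs. rewrite !csum_mult_r. apply csum_ext.
        intros j Hj. unfold Xt. ring.
      - lia.
      - intros j Hj. rewrite csum_zero. ring. intros s Hs. rewrite reorder_zero by lia. ring. }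
  rewrite csum_tri. apply csum_ext. intros s Hs.
  rewrite (csum_ext _ (fun n => csum (fun j => if (s <=? n)%nat then Xt N n j s else 0) (N + D))).
  2:{ intros n _. destruct (s <=? n)%nat. reflexivity. rewrite csum_zero; auto. }
  apply csum_swap.
Qed.

Lemma LA_inner N s j : (s <= N)%nat -> (j <= N + D)%nat ->
  csum (fun n => if (s <=? n)%nat then Xt N n j s else 0) N = csum (fun q => Yt N s q j) (N + D).
Proof.
  intros Hs Hj.
  transitivity (csum (fun i => Xt N (i + s) j s) (N - s)).
  { rewrite <- (csum_shift _ s (N - s)). replace (s + (N - s))%nat with N by lia.
    apply csum_ext. intros n _. destruct (s <=? n)%nat eqn:E. apply Nat.leb_le in E.
    replace (n - s + s)%nat with n by lia. reflexivity. reflexivity. }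
  transitivity (csum (fun i => Yt N s (i + j) j) (N + D - j)).
  2:{ rewrite <- (csum_shift _ j (N + D - j)). replace (j + (N + D - j))%nat with (N + D)%nat by lia.
    apply csum_ext. intros q _. destruct (j <=? q)%nat eqn:E.
      - apply Nat.leb_le in E. replace (q - j + j)%nat with q by lia. reflexivity.
      - apply Nat.leb_gt in E. unfold Yt. rewrite (binom_gt q j E). rewrite Nat.mul_0_r, !Nat.mul_0_l. simpl. ring. }
  symmetry.
  rewrite (csum_ext (fun i => Yt N s (i + j) j) (fun i => Xt N (i + s) j s)).
  2:{ intros i _. unfold Yt, Xt, reorder.
      replace (i + s - s + j)%nat with (i + j)%nat by lia.
      replace (i + j + s - j)%nat with (i + s)%nat by lia.
      rewrite !RtoC_INR_mult. rewrite (cpow_add (itheta th) i j), (cpow_add (itheta th) i s). ring. }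
  apply csum_bounds. intros i H1 H2.
  destruct (le_lt_dec i (N - s)) as [Hi|Hi].
  - unfold Xt. rewrite reorder_zero by lia. ring.
  - unfold Xt. rewrite (ffn_zero N (i + s)) by lia. simpl. ring.
Qed.

Lemma LemmaA N : Fz th u (N + D) * Fz th u N = Fz th (wz th u D) N.
Proof.
  rewrite LA_lhs, LA_rhs. apply csum_ext. intros s Hs. apply csum_ext. intros j Hj.
  symmetry. apply LA_inner; lia.
Qed.
End LA.


Lemma sum_n_csum (g : nat -> C) n : sum_n g n = csum g n.
Proof. induction n. rewrite sum_O. reflexivity. rewrite sum_Sn, IHn. reflexivity. Qed.

Lemma series_finite (g : nat -> C) (l : C) M :
  is_series g l -> (forall j, (M < j)%nat -> g j = 0) -> l = csum g M.
Proof.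
  intros Hs Hz.
  assert (H2 : is_series g (csum g M)).
  { unfold is_series. apply filterlim_ext_loc with (f := fun _ => csum g M).
    - exists M. intros n Hn. rewrite sum_n_csum. symmetry. apply csum_extend. lia.
      intros i Hi. apply Hz. lia.
    - apply filterlim_const. }
  unfold is_series in *. exact (filterlim_locally_unique (sum_n g) l (csum g M) Hs H2).
Qed.

Lemma series_terms_small (t : nat -> C) (l : C) :
  is_series t l -> forall eps : R, 0 < eps -> exists N, forall n, (N <= n)%nat -> Cmod (t n) < eps.
Proof.
  intros Hs eps Heps.
  assert (Hex : ex_series t) by (exists l; exact Hs).
  pose proof (Cauchy_ex_series t Hex) as Hc.
  destruct (Hc (mkposreal eps Heps)) as [N HN].
  exists N. intros n Hn. specialize (HN n n Hn Hn). rewrite sum_n_n in HN.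
  simpl in HN. exact HN.
Qed.


Definition Newton (c : nat -> C) (N : nat) : C := csum (fun q => RtoC (INR (binom N q)) * c q) N.

Lemma RtoC_INR_plus a b : RtoC (INR (a + b)) = RtoC (INR a) + RtoC (INR b).
Proof. rewrite plus_INR, RtoC_plus. reflexivity. Qed.

Lemma INR0C : RtoC (INR 0) = 0.
Proof. reflexivity. Qed.

Lemma Newton_S c N : Newton c (S N) = Newton c N + Newton (fun q => c (S q)) N.
Proof.
  unfold Newton.
  rewrite (csum_ext _ (fun q => RtoC (INR (binom N q)) * c q +
     RtoC (INR (match q with O => O | S k => binom N k end)) * c q)).
  2:{ intros q _. rewrite bpascal, RtoC_INR_plus. ring. }
  rewrite csum_plus. f_equal.
  - change (csum ?f (S N)) with (csum f N + f (S N)). cbv beta. rewrite binom_gt by lia. rewrite INR0C. ring.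
  - rewrite csum_S_first. rewrite INR0C. rewrite Cmult_0_l, Cplus_0_l. reflexivity.
Qed.

Lemma bt_ext b b' n : (forall k, b k = b' k) -> binom_transform b n = binom_transform b' n.
Proof. intros H. unfold binom_transform. apply csum_ext. intros k _. rewrite H. reflexivity. Qed.

Lemma sgn_S n k : (k <= n)%nat -> cpow (RtoC (-1)) (S n - k) = - cpow (RtoC (-1)) (n - k).
Proof. intros H. rewrite Nat.sub_succ_l by exact H. simpl. ring. Qed.

Lemma bt_S b n : binom_transform b (S n) = binom_transform (fun k => b (S k) - b k) n.
Proof.
  unfold binom_transform.
  rewrite (csum_ext _ (fun k => cpow (RtoC (-1)) (S n - k) * RtoC (INR (binom n k)) * b k +
     cpow (RtoC (-1)) (S n - k) * RtoC (INR (match k with O => O | S k' => binom n k' end)) * b k)).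
  2:{ intros q _. rewrite bpascal, RtoC_INR_plus. ring. }
  rewrite csum_plus.
  change (csum ?f (S n)) with (csum f n + f (S n)) at 1. cbv beta.
  rewrite (binom_gt n (S n)) by lia. rewrite INR0C.
  rewrite csum_S_first. rewrite INR0C.
  rewrite (csum_ext (fun k => cpow (RtoC (-1)) (S n - k) * RtoC (INR (binom n k)) * b k)
     (fun k => - (cpow (RtoC (-1)) (n - k) * RtoC (INR (binom n k)) * b k))).
  2:{ intros k Hk. rewrite sgn_S by exact Hk. ring. }
  transitivity (csum (fun k => - (cpow (RtoC (-1)) (n - k) * RtoC (INR (binom n k)) * b k)) n +
      csum (fun i => cpow (RtoC (-1)) (n - i) * RtoC (INR (binom n i)) * b (S i)) n).
  - simpl (S n - S _)%nat. ring.
  - rewrite <- csum_plus. apply csum_ext. intros k _. ring.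
Qed.

Lemma inversion n : forall c, binom_transform (Newton c) n = c n.
Proof.
  induction n; intros c.
  - unfold binom_transform, Newton. simpl. ring.
  - rewrite bt_S. rewrite (bt_ext _ (Newton (fun q => c (S q)))).
    + apply IHn.
    + intros k. rewrite Newton_S. ring.
Qed.

Lemma Cmod_cpow z j : Cmod (cpow z j) = (Cmod z ^ j)%R.
Proof. induction j; simpl. apply Cmod_1. rewrite Cmod_mult, IHj. reflexivity. Qed.

Lemma Cmod_INR x : Cmod (RtoC (INR x)) = INR x.
Proof. rewrite Cmod_R. apply Rabs_pos_eq. apply pos_INR. Qed.

Lemma Cmod_itheta th : 0 < th -> Cmod (itheta th) = th.
Proof. intros H. unfold itheta. rewrite Cmod_mult, Cmod_Ci, Cmod_R, Rabs_pos_eq by lra. ring. Qed.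

Lemma small_to_lim (f : nat -> C) :
  (forall eps : R, 0 < eps -> exists N, forall n, (N <= n)%nat -> Cmod (f n) < eps) ->
  filterlim f eventually (locally (RtoC 0)).
Proof.
  intros H. apply filterlim_locally. intros eps.
  destruct (H eps (cond_pos eps)) as [N HN]. exists N. intros n Hn.
  apply (@norm_compat1 C_AbsRing C_NormedModule).
  eapply Rle_lt_trans; [|apply (HN n Hn)]. right.
  change (Cmod (f n - 0) = Cmod (f n)). f_equal. ring.
Qed.

Lemma adj_decay th a D : 0 < th -> is_adjoint th a a ->
  forall eps : R, 0 < eps -> exists N, forall n, (N <= n)%nat ->
   Cmod (RtoC (INR (fact n)) * cpow (itheta th) n * a (n + D)%nat n) < eps.
Proof.
  intros Hth Hadj eps Heps.
  destruct (series_terms_small _ _ (Hadj D 0%nat) eps Heps) as [N HN].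
  exists N. intros n Hn. specialize (HN n Hn). simpl in HN.
  eapply Rle_lt_trans; [|exact HN].
  unfold reorder. rewrite !Cmod_mult, Cmod_conj, !Cmod_INR, Cmod_cpow.
  rewrite binom_nn, (Nat.add_comm n D).
  rewrite !mult_INR. simpl (INR 1).
  pose proof (binom_pos (D + n) n ltac:(lia)) as Hb. apply le_INR in Hb. simpl in Hb.
  pose proof (pos_INR (fact n)). pose proof (Cmod_ge_0 (a (D+n)%nat n)).
  assert (0 <= Cmod (itheta th) ^ n)%R by (apply pow_le; apply Cmod_ge_0).
  set (A := Cmod (a (D + n)%nat n)) in *. set (B := (Cmod (itheta th) ^ n)%R) in *.
  set (F := INR (fact n)) in *. set (G := INR (binom (D + n) n)) in *.
  assert (0 <= F * B * A)%R by (apply Rmult_le_pos; [apply Rmult_le_pos|]; lra).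
  nra.
Qed.


Lemma prod_extract th a D : is_product th a a a ->
  (forall p q, (q + D < p)%nat -> a p q = 0) ->
  forall n, a (n + D + D)%nat n = wz th (fun q => a (q + D)%nat q) D n.
Proof.
  intros Hp PD n.
  set (m := (n + D + D)%nat).
  set (g := fun j => csum (fun s => a (n - s + j + D)%nat (n - s + j)%nat * a (s + D)%nat s *
                                    reorder th (n - s + j) (s + D) j) n).
  assert (Hg : forall j, prod_term th a a m n j = g j).
  { intros j. unfold prod_term, g. rewrite csum_swap. apply csum_ext. intros s Hs.
    rewrite (csum_single _ (n - s + j + D)%nat m).
    - destruct (n - s + j + D <=? m)%nat eqn:E.
      + apply Nat.leb_le in E. replace (m - (n - s + j + D) + j)%nat with (s + D)%nat by (unfold m in *; lia).
        reflexivity.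
      + apply Nat.leb_gt in E. rewrite reorder_zero by (unfold m in *; lia). ring.
    - intros p Hp'. destruct (lt_dec (n - s + j + D) p) as [Hl|Hl].
      + rewrite (PD p (n - s + j)%nat) by lia. ring.
      + rewrite (PD (m - p + j)%nat s) by (unfold m in *; lia). ring. }
  pose proof (is_series_ext _ _ _ Hg (Hp m n)) as Hs.
  rewrite (series_finite g _ (n + D) Hs).
  - unfold wz, g. reflexivity.
  - intros j Hj. unfold g. apply csum_zero. intros s Hs'. rewrite reorder_zero by lia. ring.
Qed.

Lemma Cmult_integral' (x y : C) : x * y = 0 -> x = 0 \/ y = 0.
Proof.
  intros H. assert (Cmod x * Cmod y = 0)%R by (rewrite <- Cmod_mult, H; apply Cmod_0).
  apply Rmult_integral in H0. destruct H0; [left|right]; apply Cmod_eq_0; auto.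
Qed.

Lemma coef_zero th (u : nat -> C) q : 0 < th ->
  RtoC (INR (fact q)) * cpow (itheta th) q * u q = 0 -> u q = 0.
Proof.
  intros Hth H. apply Cmult_integral' in H. destruct H as [H|H]; auto.
  apply Cmult_integral' in H. exfalso. destruct H as [H|H].
  - apply (f_equal Cmod) in H. rewrite Cmod_INR, Cmod_0 in H. apply (INR_fact_neq_0 q). exact H.
  - apply (f_equal Cmod) in H. rewrite Cmod_cpow, Cmod_itheta, Cmod_0 in H by exact Hth.
    apply pow_nonzero in H; auto. lra.
Qed.

Lemma Fz_Newton th u N : Fz th u N =
  Newton (fun q => RtoC (INR (fact q)) * cpow (itheta th) q * u q) N.
Proof. unfold Fz, Newton. apply csum_ext. intros q _. rewrite ffn_fact, RtoC_INR_mult. ring. Qed.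

Lemma bt_Fz th u n : binom_transform (Fz th u) n = RtoC (INR (fact n)) * cpow (itheta th) n * u n.
Proof.
  rewrite (bt_ext _ (Newton (fun q => RtoC (INR (fact q)) * cpow (itheta th) q * u q))).
  apply inversion. intros k. apply Fz_Newton.
Qed.

Lemma step_top (H : SequenceHypothesis) th a D : 0 < th -> is_product th a a a -> is_adjoint th a a ->
  (forall p q, (q + S D < p)%nat -> a p q = 0) -> forall p q, (q + D < p)%nat -> a p q = 0.
Proof.
  intros Hth Hp Hadj PD.
  set (u := fun q => a (q + S D)%nat q).
  assert (Hw : forall n, wz th u (S D) n = 0).
  { intros n. unfold u. rewrite <- prod_extract; auto. apply PD. lia. }
  assert (Hb : forall N, Fz th u N * Fz th u (N + S D)%nat = 0).
  { intros N. rewrite Cmult_comm, LemmaA. unfold Fz. apply csum_zero. intros i _. rewrite Hw. ring. }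
  assert (Hlim : filterlim (binom_transform (Fz th u)) eventually (locally (RtoC 0))).
  { apply small_to_lim. intros eps Heps. destruct (adj_decay th a (S D) Hth Hadj eps Heps) as [N HN].
    exists N. intros n Hn. rewrite bt_Fz. apply HN; auto. }
  assert (HF : forall n, Fz th u n = RtoC 0).
  { apply (H (Fz th u)); auto. exists (S D). split. lia. exact Hb. }
  assert (Hu : forall q, u q = 0).
  { intros q. apply (coef_zero th); auto. rewrite <- bt_Fz.
    rewrite (bt_ext _ (fun _ => RtoC 0)) by exact HF. unfold binom_transform. apply csum_zero.
    intros; ring. }
  intros p q Hpq. destruct (lt_dec (q + S D) p). apply PD; auto.
  replace p with (q + S D)%nat by lia. apply Hu.
Qed.

Lemma no_upper (H : SequenceHypothesis) th a : 0 < th -> is_product th a a a -> is_adjoint th a a ->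
  forall k, (forall p q, (k < absdiff p q)%nat -> a p q = RtoC 0) ->
  forall p q, (q < p)%nat -> a p q = 0.
Proof.
  intros Hth Hp Hadj k Hk.
  assert (Hall : forall D, (forall p q, (q + D < p)%nat -> a p q = 0) -> forall p q, (q < p)%nat -> a p q = 0).
  { induction D; intros PD.
    - intros p q Hpq. apply PD. lia.
    - apply IHD. apply (step_top H th a D); auto. }
  apply (Hall k). intros p q Hpq. apply Hk. unfold absdiff. lia.
Qed.

Definition transp (a : coefs) : coefs := fun p q => a q p.

Lemma prod_T th a : is_product th a a a -> is_product th (transp a) (transp a) (transp a).
Proof.
  intros Hp m n. unfold transp.
  apply (is_series_ext (fun j => prod_term th a a n m j)); [|apply Hp].
  intros j. unfold prod_term. rewrite csum_swap. apply csum_ext. intros s _. apply csum_ext. intros p _.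
  rewrite reorder_sym. ring.
Qed.

Lemma adj_T th a : is_adjoint th a a -> is_adjoint th (transp a) (transp a).
Proof.
  intros Hadj m n. unfold transp.
  apply (is_series_ext (fun j => Cconj (a (n + j)%nat (m + j)%nat) * reorder th (m + j) (n + j) j)); [|apply Hadj].
  intros j. rewrite reorder_sym. reflexivity.
Qed.


Definition isZ (x : C) : Prop := exists z : Z, x = RtoC (IZR z).

Lemma isZ_plus x y : isZ x -> isZ y -> isZ (x + y).
Proof. intros [a ->] [b ->]. exists (a + b)%Z. rewrite plus_IZR, RtoC_plus. reflexivity. Qed.

Lemma isZ_mult x y : isZ x -> isZ y -> isZ (x * y).
Proof. intros [a ->] [b ->]. exists (a * b)%Z. rewrite mult_IZR, RtoC_mult. reflexivity. Qed.

Lemma isZ_INR n : isZ (RtoC (INR n)).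
Proof. exists (Z.of_nat n). rewrite INR_IZR_INZ. reflexivity. Qed.

Lemma isZ_cpow_m1 n : isZ (cpow (RtoC (-1)) n).
Proof. induction n; simpl. exists 1%Z. reflexivity. apply isZ_mult; auto. exists (-1)%Z. reflexivity. Qed.

Lemma isZ_csum f n : (forall i, (i <= n)%nat -> isZ (f i)) -> isZ (csum f n).
Proof. induction n; intros H; simpl. apply H; lia. apply isZ_plus. apply IHn; intros; apply H; lia. apply H; lia. Qed.

Lemma isZ_small x : isZ x -> Cmod x < 1 -> x = 0.
Proof.
  intros [z ->] H. rewrite Cmod_R in H. apply Rabs_def2 in H.
  rewrite (one_IZR_lt1 z) by lra. reflexivity.
Qed.

Lemma csum_two (f : nat -> C) N : (1 <= N)%nat -> (forall q, (2 <= q)%nat -> f q = 0) -> csum f N = f 0%nat + f 1%nat.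
Proof.
  intros HN Hz. rewrite (csum_extend f 1 N) by (try lia; intros; apply Hz; lia). reflexivity.
Qed.

Lemma diag_case th a : 0 < th -> is_product th a a a -> is_adjoint th a a ->
  (forall p q, (q < p)%nat -> a p q = 0) -> (forall p q, (p < q)%nat -> a p q = 0) ->
  a = zero_coefs \/ a = one_coefs.
Proof.
  intros Hth Hp Hadj Hlow Hup.
  set (u := fun q => a (q + 0)%nat q).
  assert (Hw : forall n, wz th u 0 n = u n).
  { intros n. unfold u. rewrite <- prod_extract; auto.
    - rewrite !Nat.add_0_r. reflexivity.
    - intros p q Hpq. apply Hlow. lia. }
  assert (HF2 : forall N, Fz th u N * Fz th u N = Fz th u N).
  { intros N. pose proof (LemmaA th u 0 N) as HA. rewrite Nat.add_0_r in HA. rewrite HA.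
    unfold Fz. apply csum_ext. intros i _. rewrite Hw. reflexivity. }
  assert (H01 : forall N, Fz th u N = 0 \/ Fz th u N = 1).
  { intros N. assert (Fz th u N * (Fz th u N - 1) = 0) by (rewrite Cmult_comm; 
      transitivity (Fz th u N * Fz th u N - Fz th u N); [ring|rewrite HF2; ring]).
    apply Cmult_integral' in H. destruct H; [left; auto|right].
    transitivity (Fz th u N - 1 + 1). ring. rewrite H. ring. }
  set (c := fun q => RtoC (INR (fact q)) * cpow (itheta th) q * u q).
  assert (HcZ : forall n, isZ (c n)).
  { intros n. unfold c. rewrite <- bt_Fz. unfold binom_transform. apply isZ_csum. intros k _.
    apply isZ_mult. apply isZ_mult. apply isZ_cpow_m1. apply isZ_INR.
    destruct (H01 k) as [E|E]; rewrite E. exists 0%Z; reflexivity. exists 1%Z; reflexivity. }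
  assert (Hev : exists M, forall n, (M <= n)%nat -> c n = 0).
  { destruct (adj_decay th a 0 Hth Hadj 1 ltac:(lra)) as [M HM]. exists M. intros n Hn.
    apply isZ_small; auto. apply HM; auto. }
  assert (HNw : forall N, Fz th u N = Newton c N) by (intros; apply Fz_Newton).
  assert (Hbd : forall m N, (Cmod (Newton (fun q => c (q + m)%nat) N) <= 2 ^ m)%R).
  { induction m; intros N.
    - assert (E0 : Newton (fun q => c (q + 0)%nat) N = Newton c N)
        by (unfold Newton; apply csum_ext; intros; rewrite Nat.add_0_r; reflexivity).
      rewrite E0, <- HNw. destruct (H01 N) as [E|E]; rewrite E; simpl. rewrite Cmod_0; lra. rewrite Cmod_1; lra.
    - assert (E : Newton (fun q => c (q + S m)%nat) N =
         Newton (fun q => c (q + m)%nat) (S N) - Newton (fun q => c (q + m)%nat) N).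
      { rewrite Newton_S. unfold Newton at 3. 
        rewrite (csum_ext (fun q => RtoC (INR (binom N q)) * c (S q + m)%nat)
                   (fun q => RtoC (INR (binom N q)) * c (q + S m)%nat)).
        2:{ intros. f_equal. f_equal. lia. }
        fold (Newton (fun q => c (q + S m)%nat) N). ring. }
      rewrite E. simpl.
      eapply Rle_trans. apply Cmod_triangle. rewrite Cmod_opp.
      pose proof (IHm (S N)). pose proof (IHm N). lra. }
  assert (Hpol : forall d, (forall e, (d < e)%nat -> c e = 0) -> forall e, (1 <= e)%nat -> c e = 0).
  { induction d; intros Hd.
    - intros e He. apply Hd. lia.
    - destruct (classic (c (S d) = 0)) as [Hz|Hnz].
      + apply IHd. intros e He. destruct (Nat.eq_dec e (S d)) as [->|Hne]. exact Hz. apply Hd. lia.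
      + exfalso.
        assert (Hge : (1 <= Cmod (c (S d)))%R).
        { destruct (Rlt_le_dec (Cmod (c (S d))) 1) as [Hl|Hl]; auto.
          exfalso. apply Hnz. apply isZ_small; auto. }
        destruct (INR_unbounded (2 ^ d + Cmod (c d))%R) as [N HN].
        assert (HN1 : (1 <= N)%nat).
        { destruct N. simpl in HN. pose proof (Cmod_ge_0 (c d)). pose proof (pow_le 2 d ltac:(lra)). lra. lia. }
        assert (EN : Newton (fun q => c (q + d)%nat) N = c d + RtoC (INR N) * c (S d)).
        { unfold Newton. rewrite csum_two; auto.
          - rewrite binom_0, binom_1. simpl (0 + d)%nat. simpl (1 + d)%nat. simpl (INR 1). ring.
          - intros q Hq. rewrite Hd by lia. ring. }
        pose proof (Hbd d N) as HB. rewrite EN in HB.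
        assert (HT : (Cmod (RtoC (INR N) * c (S d)) <= Cmod (c d + RtoC (INR N) * c (S d)) + Cmod (c d))%R).
        { replace (RtoC (INR N) * c (S d)) with ((c d + RtoC (INR N) * c (S d)) + - c d) at 1 by ring.
          eapply Rle_trans. apply Cmod_triangle. rewrite Cmod_opp. lra. }
        rewrite Cmod_mult, Cmod_INR in HT.
        pose proof (pos_INR N).
        assert (INR N <= INR N * Cmod (c (S d)))%R by nra.
        lra. }
  destruct Hev as [M HM].
  assert (Hc1 : forall e, (1 <= e)%nat -> c e = 0) by (apply (Hpol M); intros; apply HM; lia).
  assert (Hu1 : forall e, (1 <= e)%nat -> a e e = 0).
  { intros e He. pose proof (coef_zero th u e Hth (Hc1 e He)) as Hz. unfold u in Hz.
    rewrite Nat.add_0_r in Hz. exact Hz. }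
  assert (Ha00 : a 0%nat 0%nat = Fz th u 0).
  { unfold Fz, u. simpl. ring. }
  assert (Hall : forall p q, a p q = if (Nat.eqb p 0 && Nat.eqb q 0)%bool then a 0%nat 0%nat else 0).
  { intros p q. destruct (lt_dec q p). rewrite Hlow by auto. destruct p, q; simpl; lia || reflexivity.
    destruct (lt_dec p q). rewrite Hup by auto. destruct p, q; simpl; lia || reflexivity.
    assert (p = q) by lia. subst q. destruct p. reflexivity. simpl. apply Hu1; lia. }
  destruct (H01 0%nat) as [E|E]; rewrite E in Ha00; [left|right];
    apply functional_extensionality; intros p; apply functional_extensionality; intros q;
    rewrite Hall, Ha00; destruct p, q; reflexivity.
Qed.

Close Scope C_scope.
Open Scope R_scope.

Theorem theorem1p3 :
  SequenceHypothesis ->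
  forall theta : R, 0 < theta ->
  forall a : coefs,
    schwartz a ->
    is_product theta a a a ->
    is_adjoint theta a a ->
    (exists k : nat, forall p q : nat, (k < absdiff p q)%nat -> a p q = RtoC 0) ->
    a = zero_coefs \/ a = one_coefs.
Proof.
  intros H th Hth a _ Hp Hadj [k Hk].
  apply (diag_case th a Hth Hp Hadj).
  - apply (no_upper H th a Hth Hp Hadj k Hk).
  - intros p q Hpq. apply (no_upper H th (transp a) Hth (prod_T th a Hp) (adj_T th a Hadj) k) with (p := q) (q := p); auto.
    intros p' q' Hpq'. unfold transp. apply Hk. unfold absdiff in *. lia.
Qed.
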